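(* Let $q$ be a prime power, $n\geq 3$, and let $I_n(q)$ be the bipartite graph whose vertices are the $1$-dimensional and the $(n-1)$-dimensional subspaces of an $n$-dimensional vector space over the field with $q$ elements, with a $1$-dimensional subspace adjacent to an $(n-1)$-dimensional subspace if and only if it is contained in it. Then $I_n(q)$ is (isomorphic to) a Cayley graph.
   Context: For a finite group $\Gamma$ and a subset $S\subseteq\Gamma$ that does not contain the identity, is closed under inverses, and generates $\Gamma$, the Cayley graph of $\Gamma$ with respect to $S$ has vertex set $\Gamma$ and an edge between $g$ and $h$ whenever $g^{-1}h\in S$. A graph is a Cayley graph if it is isomorphic to the Cayley graph of some such pair $(\Gamma,S)$. *)

(* Defs.v *)
From HB Require Import structures.
From mathcomp Require Import all_boot all_algebra all_fingroup all_field.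
Set Implicit Arguments. Unset Strict Implicit. Unset Printing Implicit Defensive.

Import VectorInternalTheory.
HB.instance Definition _ (F : finFieldType) (n : nat) :=
  [Finite of {vspace 'rV[F]_n} by <:].

Local Open Scope group_scope.

Definition is_cayley_graph (V : finType) (e : rel V) : Prop :=
  exists (gT : finGroupType) (S : {set gT}),
    [/\ 1 \notin S,
        (forall s, s \in S -> s^-1 \in S),
        <<S>> = [set: gT] &
        exists f : V -> gT, bijective f /\
          forall x y : V, e x y = ((f x)^-1 * f y \in S)].

Local Close Scope group_scope.

Definition In_vertex (F : finFieldType) (n : nat) :=
  {U : {vspace 'rV[F]_n} | (\dim U == 1%N) || (\dim U == n.-1)}.

Definition In_adj (F : finFieldType) (n : nat) : rel (In_vertex F n) :=
  fun x y =>
    let U := val x in let W := val y in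
    [&& \dim U == 1%N, \dim W == n.-1 & (U <= W)%VS] ||
    [&& \dim W == 1%N, \dim U == n.-1 & (W <= U)%VS].

(* Main.v *)
Require Import Defs.
From HB Require Import structures.
From mathcomp Require Import all_boot all_algebra all_fingroup all_field.
From mathcomp Require Import zify.
From Stdlib Require Import Lia.
Set Implicit Arguments. Unset Strict Implicit. Unset Printing Implicit Defensive.
Import GRing.Theory.
Import VectorInternalTheory.
Local Open Scope ring_scope.

Lemma card_F_zero (F : finFieldType) : (#|F|%:R : F) = 0.
Proof.
have [p pr_p pcharFp] := finPcharP F.
have := card_pprimeChar pcharFp => /= E.
apply/eqP; rewrite -(dvdn_pcharf pcharFp).
move: E; set k := logn _ _ => E.
have : (1 < #|F|)%N by apply: finNzRing_gt1.
change (#|pPrimeCharType pcharFp|) with #|F| in E.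
rewrite E; case: k {E} => [|k] //= _.
by rewrite expnS dvdn_mulr.
Qed.

Lemma ext_exists (F : finFieldType) (n : nat) : (0 < n)%N ->
  exists L : fieldExtType F, \dim {:L} = n.
Proof.
move=> n_gt0.
pose m := (#|F| ^ n)%N.
have F_gt1 : (1 < #|F|)%N by apply: finNzRing_gt1.
have m_gt1 : (1 < m)%N by rewrite /m (ltn_exp2l 0).
pose q := ('X^m - 'X : {poly F}).
have q_nz : q != 0.
  by rewrite -size_poly_eq0 /q size_polyDl ?size_polyXn ?size_polyN ?size_polyX.
have [L splitLq] := FinSplittingFieldFor q_nz.
exists L.
have [zs DqL defL] := splitLq.
set qL := map_poly _ q in DqL.
have EqL : qL = 'X^m - 'X by rewrite /qL rmorphB /= rmorphXn /= map_polyX.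
rewrite {}EqL in DqL.
have mL0 : (m%:R : L) = 0.
  rewrite -(rmorph_nat (in_alg L)) /m -(prednK n_gt0).
  rewrite expnS natrM card_F_zero mul0r.
  by rewrite rmorph0.
have Uzs: uniq zs.
  rewrite -separable_prod_XsubC -(eqp_separable DqL).
  rewrite unlock derivB derivXn derivX -scaler_nat mL0 scale0r sub0r.
  by rewrite -(scaleN1r (1 : {poly L})) coprimepZr ?oppr_eq0 ?oner_eq0 // coprimep1.
have /finField_galois_generator[/= a _ Da]: (1 <= {:L})%VS by apply: sub1v.
rewrite dimv1 expn1 in Da.
pose Em := fixedSpace (a ^+ n)%g.
pose Fm := FinFieldExtType L.
have in_zs: zs =i Em.
  move=> z; rewrite -root_prod_XsubC -(eqp_root DqL) (sameP fixedSpaceP eqP).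
  rewrite /root !hornerE subr_eq0 /= /m; congr (_ == z).
  elim: (n) => [|i IHi]; first by rewrite gal_id.
  by rewrite expgSr expnSr exprM IHi galM ?Da ?memvf.
have defEm: Em = {:L}%VS.
  apply/eqP; rewrite eqEsubv subvf -defL -[Em]subfield_closed agenvS //.
  by rewrite subv_add sub1v; apply/span_subvP=> z; rewrite in_zs.
have cardL : #|Fm| = m.
  have /eq_card-> : Fm =i zs by move=> z; rewrite in_zs defEm memvf.
  apply: succn_inj; rewrite (card_uniqP _) //= -(size_prod_XsubC _ id).
  by rewrite -(eqp_size DqL) size_polyDl size_polyXn // size_polyN size_polyX.
have := card_vspace (fullv : {vspace finvect_type L}).
rewrite card_vspacef; change #|finvect_type L| with #|Fm|; rewrite cardL /m => /eqP.
by rewrite eqn_exp2l // => /eqP.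
Qed.

Definition fvspace (F : finFieldType) (vT : vectType F) := {vspace vT}.
HB.instance Definition _ (F : finFieldType) (vT : vectType F) :=
  [isSub of fvspace vT for @vs2mx F vT].
HB.instance Definition _ (F : finFieldType) (vT : vectType F) :=
  [Finite of fvspace vT by <:].

Section CT.
Local Open Scope group_scope.
Lemma cayley_transfer (V1 V2 : finType) (e1 : rel V1) (e2 : rel V2) (h : V1 -> V2) :
  bijective h -> (forall x y, e2 (h x) (h y) = e1 x y) ->
  is_cayley_graph e1 -> is_cayley_graph e2.
Proof.
move=> [h' hK h'K] eh [gT [S [S1 SV SG [f [fbij ef]]]]].
exists gT, S; split=> //; exists (f \o h'); split.
  by apply: bij_comp => //; exists h.
by move=> x y; rewrite -ef -eh !h'K.
Qed.

End CT.
Section Sabidussi.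
Local Open Scope group_scope.
Variables (V : finType) (e : rel V) (G : {group {perm V}}) (v0 : V).
Hypotheses (e_irr : irreflexive e) (e_sym : symmetric e).
Hypothesis e_aut : forall g, g \in G -> forall x y, e (g x) (g y) = e x y.
Hypothesis G_trans : forall x, exists2 g, g \in G & g v0 = x.
Hypothesis G_free : forall g, g \in G -> g v0 = v0 -> g = 1.
Hypothesis e_conn : forall x, connect e v0 x.

Let pickg x := odflt 1 [pick g in G | g v0 == x].
Let pickgP x : pickg x \in G /\ pickg x v0 = x.
Proof.
rewrite /pickg; case: pickP => [g /andP[gG /eqP] //|].
by have [g gG gx] := G_trans x => /(_ g); rewrite gG gx eqxx.
Qed.

Let uniqg g h : g \in G -> h \in G -> g v0 = h v0 -> g = h.
Proof.
move=> gG hG ghv.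
have : g * h^-1 = 1.
  apply: G_free; first by rewrite groupM ?groupV.
  by rewrite permM ghv -permM mulgV perm1.
by move=> gh1; rewrite -(mulgKV h g) gh1 mul1g.
Qed.

Let sgV (u : subg_of G) : sgval u^-1 = (sgval u)^-1. Proof. by []. Qed.
Let sgM (u v : subg_of G) : sgval (u * v) = sgval u * sgval v. Proof. by []. Qed.
Let sg1 : sgval (1 : subg_of G) = 1. Proof. by []. Qed.

Lemma sabidussi : is_cayley_graph e.
Proof.
pose f (x : V) : subg_of G := (subg G (pickg x))^-1.
pose S := [set s : subg_of G | e v0 (sgval s v0)].
have fval x : sgval (f x) = (pickg x)^-1.
  by rewrite /f sgV subgK //; case: (pickgP x).
have fK : cancel (fun s : subg_of G => ((sgval s)^-1 : {perm V}) v0) f.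
  move=> s; apply: subg_inj; rewrite fval.
  have sG : sgval s \in G := subgP s.
  have [pG pv] := pickgP (((sgval s)^-1 : {perm V}) v0).
  by rewrite (uniqg pG (groupVr sG) pv) invgK.
have ef x y : e x y = ((f x)^-1 * f y \in S).
  rewrite inE sgM sgV !fval invgK.
  have [gx gxv] := pickgP x; have [gy gyv] := pickgP y.
  by rewrite permM gxv -(e_aut gy v0) gyv permKV e_sym.
exists (subg_of G), S; split.
- by rewrite inE sg1 perm1 e_irr.
- move=> s; rewrite !inE sgV => es.
  have sG : sgval s \in G := subgP s.
  by rewrite -(e_aut sG) -permM mulVg perm1 e_sym.
- apply/setP=> s; rewrite inE -(fK s).
  move: (((sgval s)^-1 : {perm V}) v0) => x.
  have /connectP[p pp ->] := e_conn x.
  elim/last_ind: p pp => [_|p z IH] /=.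
    have -> : f v0 = 1.
      apply: subg_inj; rewrite fval sg1.
      have [pG pv] := pickgP v0.
      by rewrite (uniqg pG (group1 G) (etrans pv (esym (perm1 v0)))) invg1.
    exact: group1.
  rewrite rcons_path last_rcons => /andP[pp ez].
  rewrite -(mulKVg (f (last v0 p)) (f z)); apply: groupM; first exact: IH.
  by apply: mem_gen; rewrite -ef.
- exists f; split=> //.
  exists (fun s => ((sgval s)^-1 : {perm V}) v0) => // x.
  rewrite fval invgK; by case: (pickgP x).
Qed.
End Sabidussi.

Section Iso.
Variables (F : fieldType) (vT wT : vectType F) (f : 'Hom(vT, wT)) (g : 'Hom(wT, vT)).
Hypotheses (fK : cancel f g) (gK : cancel g f).

Lemma iso_dim U : \dim (f @: U) = \dim U.
Proof.
apply: limg_dim_eq; apply/eqP; rewrite -subv0; apply/subvP => x.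
rewrite memv_cap memv_ker => /andP[_ /eqP fx0].
by rewrite memv0 -(fK x) fx0 linear0.
Qed.

Lemma iso_sub U W : (f @: U <= f @: W)%VS = (U <= W)%VS.
Proof.
apply: limg_ker0; apply/lker0P; exact: can_inj fK.
Qed.

Lemma iso_K U : (g @: (f @: U))%VS = U.
Proof.
rewrite -limg_comp.
have -> : (g \o f)%VF = \1%VF by apply/lfunP => x; rewrite comp_lfunE id_lfunE fK.
exact: lim1g.
Qed.
End Iso.

Section Geo.
Variables (F : finFieldType) (L : fieldExtType F) (n : nat).
Hypothesis dimL : \dim {:L} = n.
Hypothesis n3 : (3 <= n)%N.
Variable i0 : 'I_(\dim {:L}).

Definition lam (x : L) : F := coord (vbasis {:L}) i0 x.
Definition e0 : L := (vbasis {:L})`_i0.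

Lemma lam_e0 : lam e0 = 1.
Proof. by rewrite /lam /e0 coord_free ?eqxx // (basis_free (vbasisP _)). Qed.

Lemma lamD x y : lam (x + y) = lam x + lam y.
Proof. by rewrite /lam linearD. Qed.
Lemma lamB x y : lam (x - y) = lam x - lam y.
Proof. by rewrite /lam linearB. Qed.
Lemma lamZ k x : lam (k *: x) = k * lam x.
Proof. by rewrite /lam linearZ. Qed.
Lemma lam_sum (I : finType) (f : I -> L) : lam (\sum_i f i) = \sum_i lam (f i).
Proof. by rewrite /lam linear_sum. Qed.

Lemma nondeg z : (forall y, lam (z * y) = 0) -> z = 0.
Proof.
move=> H; apply/eqP; apply/negPn/negP => nz.
by have := H (z^-1 * e0); rewrite mulVKf // lam_e0 => /eqP; rewrite oner_eq0.
Qed.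

Definition psi (U : {vspace L}) (a : L) : 'rV[F]_(\dim U) :=
  \row_(i < \dim U) lam (a * (vbasis U)`_i).

Fact psi_lin U : linear (psi U).
Proof.
move=> k a b; apply/rowP => i; rewrite !mxE mulrDl lamD -scalerAl lamZ.
by [].
Qed.

HB.instance Definition _ U := GRing.isSemilinear.Build F L 'rV[F]_(\dim U) _ (psi U)
  (GRing.semilinear_linear (psi_lin U)).

Definition perp (U : {vspace L}) : {vspace L} := lker (linfun (psi U)).

Lemma memv_perp (U : {vspace L}) a :
  reflect (forall u, u \in U -> lam (a * u) = 0) (a \in perp U).
Proof.
rewrite /perp memv_ker lfunE /=; apply: (iffP eqP) => [H u uU | H].
  rewrite (coord_vbasis uU) mulr_sumr lam_sum big1 // => i _.
  have := congr1 (fun r : 'rV[F]_(\dim U) => r 0 i) H; rewrite !mxE => Hi.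
  by rewrite -scalerAr lamZ Hi mulr0.
apply/rowP => i; rewrite !mxE; apply: H.
by apply: vbasis_mem; apply: mem_nth; rewrite size_tuple.
Qed.

Lemma dim_perp (U : {vspace L}) : (n - \dim U <= \dim (perp U))%N.
Proof.
have := limg_ker_dim (linfun (psi U)) fullv.
rewrite capfv dimL => <-.
rewrite /perp leq_subLR addnC leq_add2r.
have := dimvS (subvf (linfun (psi U) @: fullv)); rewrite dimvf /=.
by rewrite [dim _]dim_matrix mul1r.
Qed.


Lemma perp_anti (U W : {vspace L}) : (U <= W)%VS -> (perp W <= perp U)%VS.
Proof.
move=> sUW; apply/subvP => a /memv_perp H; apply/memv_perp => u uU.
by apply: H; apply: (subvP sUW).
Qed.

Lemma sub_perpperp (U : {vspace L}) : (U <= perp (perp U))%VS.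
Proof.
apply/subvP => u uU; apply/memv_perp => a /memv_perp H.
by rewrite mulrC H.
Qed.

Lemma vpick_nz (U : {vspace L}) : (0 < \dim U)%N -> vpick U != 0.
Proof. by rewrite vpick0 -dimv_eq0 -lt0n. Qed.

Lemma dim1_line (U : {vspace L}) : \dim U = 1%N -> U = <[vpick U]>%VS.
Proof.
move=> dU; apply/eqP; rewrite eq_sym eqEdim -memvE memv_pick dim_vline.
by rewrite vpick_nz ?dU.
Qed.

Lemma perp_point (U : {vspace L}) : \dim U = 1%N -> \dim (perp U) = n.-1.
Proof.
move=> dU; apply/eqP; rewrite eqn_leq.
have lb := dim_perp U; rewrite dU subn1 in lb; rewrite lb andbT.
have x_nz : vpick U != 0 by apply: vpick_nz; rewrite dU.
set x := vpick U in x_nz.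
have xU : x \in U by apply: memv_pick.
have n_gt0 : (0 < n)%N by apply: leq_trans n3.
rewrite -ltnS (prednK n_gt0).
rewrite ltn_neqAle -{2}dimL dimvS ?subvf // andbT -{1}dimL.
apply/negP => /eqP dP.
have : (x^-1 * e0) \in perp U.
  have /eqP -> : (perp U == fullv)%VS by rewrite eqEdim subvf dP leqnn.
  exact: memvf.
move/memv_perp => /(_ x xU); rewrite mulrC mulVKf // lam_e0 => /eqP.
by rewrite oner_eq0.
Qed.

Lemma perp_hyper (W : {vspace L}) : \dim W = n.-1 -> \dim (perp W) = 1%N.
Proof.
move=> dW; apply/eqP; rewrite eqn_leq.
have n_gt0 : (0 < n)%N by apply: leq_trans n3.
have e1 : (n - n.-1 = 1)%N by rewrite -{1}(prednK n_gt0) subSnn.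
have := dim_perp W; rewrite dW e1 => -> ; rewrite andbT.
have a_nz : vpick (perp W) != 0.
  by apply: vpick_nz; apply: leq_trans (dim_perp W); rewrite dW e1.
set a := vpick (perp W) in a_nz *.
have aW : a \in perp W by apply: memv_pick.
have dla : \dim <[a]> = 1%N by rewrite dim_vline a_nz.
have Wa : W = perp <[a]>.
  apply/eqP; rewrite eqEdim perp_point // dW leqnn andbT.
  apply/subvP => w wW; apply/memv_perp => u /vlineP[k ->].
  by rewrite -scalerAr lamZ [w * a]mulrC (memv_perp _ _ aW) // mulr0.
have key b : b \in perp W -> forall y, lam (a * y) = 0 -> lam (b * y) = 0.
  move=> bW y ay; apply: (memv_perp _ _ bW).
  rewrite Wa; apply/memv_perp => u /vlineP[k ->].
  by rewrite -scalerAr lamZ [y * a]mulrC ay mulr0.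
rewrite -dla dimvS //; apply/subvP => b bW.
pose y0 := a^-1 * e0.
have ay0 : lam (a * y0) = 1 by rewrite /y0 mulVKf // lam_e0.
pose c := lam (b * y0).
have -> : b = c *: a.
  apply/eqP; rewrite -subr_eq0; apply/eqP; apply: nondeg => y.
  have : lam (b * (y - lam (a * y) *: y0)) = 0.
    apply: key => //.
    by rewrite mulrBr lamB -scalerAr lamZ ay0 mulr1 subrr.
  rewrite mulrBr lamB -scalerAr lamZ -/c => /eqP; rewrite subr_eq0 => /eqP H.
  by rewrite mulrBl lamB -scalerAl lamZ H mulrC subrr.
by rewrite memvZ // memv_line.
Qed.


Lemma perpK (U : {vspace L}) : (\dim U == 1%N) || (\dim U == n.-1) -> perp (perp U) = U.
Proof.
case/orP => /eqP dU; apply/eqP; rewrite eq_sym eqEdim sub_perpperp /=.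
  by rewrite perp_hyper ?perp_point // dU.
by rewrite perp_point ?perp_hyper // dU.
Qed.

Definition mulsp (c : L) (U : {vspace L}) := (@amull F L c @: U)%VS.
Local Notation amull := (@amull F L).

Lemma amullK c : c != 0 -> cancel (amull c) (amull c^-1).
Proof. by move=> cz x; rewrite !lfunE /= mulKf. Qed.
Lemma amullKV c : c != 0 -> cancel (amull c^-1) (amull c).
Proof. by move=> cz x; rewrite !lfunE /= mulVKf. Qed.

Lemma mem_mulsp c U x : c != 0 -> (x \in mulsp c U) = (c^-1 * x \in U).
Proof.
move=> cz; apply/memv_imgP/idP => [[u uU ->] | H].
  by rewrite lfunE /= mulKf.
by exists (c^-1 * x) => //; rewrite lfunE /= mulVKf.
Qed.

Lemma dim_mulsp c U : c != 0 -> \dim (mulsp c U) = \dim U.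
Proof. by move=> cz; apply: (iso_dim (amullK cz)). Qed.

Lemma sub_mulsp c U W : c != 0 -> (mulsp c U <= mulsp c W)%VS = (U <= W)%VS.
Proof. by move=> cz; apply: (iso_sub (amullK cz)). Qed.

Lemma mulspM c d U : mulsp c (mulsp d U) = mulsp (c * d) U.
Proof.
rewrite /mulsp -limg_comp; congr (_ @: _)%VS.
by apply/lfunP => x; rewrite comp_lfunE !lfunE /= mulrA.
Qed.

Lemma mulsp1 U : mulsp 1 U = U.
Proof. by rewrite /mulsp amull1 lim1g. Qed.

Lemma mulsp_line c d U : c != 0 -> d != 0 -> d \in <[c]>%VS -> mulsp d U = mulsp c U.
Proof.
move=> cz dz /vlineP[k dk]; have kz : k != 0.
  by apply: contraNneq dz => k0; rewrite dk k0 scale0r.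
apply/vspaceP => x; rewrite !mem_mulsp // dk.
have -> : (k *: c)^-1 * x = k^-1 *: (c^-1 * x).
  rewrite -[k *: c]mulr_algl invfM -in_algE -fmorphV.
  by rewrite -mulrA; exact: mulr_algl.
apply/idP/idP => H; last exact: memvZ.
by rewrite -[c^-1 * x](scale1r) -(mulfV kz) -scalerA memvZ.
Qed.

Lemma perp_mulsp c U : c != 0 -> perp (mulsp c U) = mulsp c^-1 (perp U).
Proof.
move=> cz; apply/vspaceP => a; rewrite mem_mulsp ?invr_neq0 // invrK.
apply/memv_perp/memv_perp => H.
  move=> u uU; rewrite -mulrA mulrCA; apply: H.
  by rewrite mem_mulsp // mulKf.
move=> v; rewrite mem_mulsp // => vU.
by have := H _ vU; rewrite [c * a]mulrC -mulrA mulVKf.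
Qed.

Definition VL := {U : fvspace L | (\dim U == 1%N) || (\dim U == n.-1)}.

Definition adjL : rel VL :=
  fun x y =>
    let U := val x in let W := val y in
    [&& \dim U == 1%N, \dim W == n.-1 & (U <= W)%VS] ||
    [&& \dim W == 1%N, \dim U == n.-1 & (W <= U)%VS].

Definition nz (c : L) := if c == 0 then 1 else c.
Lemma nzP c : nz c != 0.
Proof. by rewrite /nz; case: ifP => [_|/negbT] //; rewrite oner_eq0. Qed.
Lemma nzE c : c != 0 -> nz c = c.
Proof. by rewrite /nz => /negbTE ->. Qed.

Lemma vert_mulsp c (U : VL) : c != 0 ->
  (\dim (mulsp c (val U)) == 1%N) || (\dim (mulsp c (val U)) == n.-1).
Proof. by move=> cz; rewrite dim_mulsp //; exact: (valP U). Qed.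

Definition mmf c (U : VL) : VL := insubd U (mulsp (nz c) (val U)).
Lemma mmfE' c U : val (mmf c U) = mulsp (nz c) (val U).
Proof. by rewrite /mmf insubdK //=; exact: vert_mulsp (nzP c). Qed.

Lemma mmf_inj c : injective (mmf c).
Proof.
move=> U W /(congr1 val); rewrite !mmfE' => /(congr1 (mulsp (nz c)^-1)).
by rewrite !mulspM mulVf ?nzP // !mulsp1 => /val_inj.
Qed.

Definition mm (c : L) : {perm VL} := perm (@mmf_inj c).
Lemma mmE c U : c != 0 -> val (mm c U) = mulsp c (val U).
Proof. by move=> cz; rewrite permE mmfE' nzE. Qed.

Lemma n1_neq1 : (n.-1 == 1%N) = false.
Proof. by case: n n3 => [|[|[|k]]]. Qed.

Lemma dim_perp1 (U : VL) : (\dim (perp (val U)) == 1%N) = (\dim (val U) == n.-1).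
Proof.
case/orP: (valP U) => /eqP dU; rewrite dU.
  by rewrite perp_point // n1_neq1 eq_sym n1_neq1.
by rewrite perp_hyper // !eqxx.
Qed.

Lemma dim_perpn (U : VL) : (\dim (perp (val U)) == n.-1) = (\dim (val U) == 1%N).
Proof.
case/orP: (valP U) => /eqP dU; rewrite dU.
  by rewrite perp_point // !eqxx.
by rewrite perp_hyper // n1_neq1 eq_sym n1_neq1.
Qed.

Lemma vert_perp (U : VL) :
  (\dim (perp (val U)) == 1%N) || (\dim (perp (val U)) == n.-1).
Proof. by rewrite dim_perp1 dim_perpn orbC; exact: (valP U). Qed.

Definition sigf (U : VL) : VL := insubd U (perp (val U)).
Lemma sigfE U : val (sigf U) = perp (val U).
Proof. by rewrite /sigf insubdK //=; exact: vert_perp. Qed.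

Lemma sigfK : involutive sigf.
Proof. by move=> U; apply: val_inj; rewrite !sigfE perpK //; exact: (valP U). Qed.

Definition sig : {perm VL} := perm (inv_inj sigfK).
Lemma sigE U : val (sig U) = perp (val U).
Proof. by rewrite permE sigfE. Qed.

Lemma sub_perpV (U W : VL) : (perp (val U) <= perp (val W))%VS = (val W <= val U)%VS.
Proof.
apply/idP/idP => [H|]; last exact: perp_anti.
by rewrite -(perpK (valP U)) -(perpK (valP W)) perp_anti.
Qed.

Lemma adj_mm c x y : c != 0 -> adjL (mm c x) (mm c y) = adjL x y.
Proof. by move=> cz; rewrite /adjL !mmE // !dim_mulsp // !sub_mulsp. Qed.

Lemma adj_sig x y : adjL (sig x) (sig y) = adjL x y.
Proof.
rewrite /adjL !sigE !dim_perp1 !dim_perpn !sub_perpV orbC.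
by congr (_ || _); rewrite andbCA.
Qed.

Lemma vert_line (c : L) : c != 0 -> (\dim <[c]> == 1%N) || (\dim <[c]> == n.-1).
Proof. by move=> cz; rewrite dim_vline cz eqxx. Qed.

Definition v0 : VL := Sub (<[1]>%VS : fvspace L) (vert_line (oner_neq0 L)).
Definition point (c : L) : VL := insubd v0 (<[c]>%VS : fvspace L).
Lemma pointE c : c != 0 -> val (point c) = <[c]>%VS.
Proof. by move=> cz; rewrite /point insubdK //=; exact: vert_line. Qed.

Lemma vert_nz (U : VL) : vpick (val U) != 0.
Proof.
apply: vpick_nz; case/orP: (valP U) => /eqP -> //.
by case: n n3 => [|[|[|k]]].
Qed.

Lemma mm_line c d : c != 0 -> d != 0 -> d \in <[c]>%VS -> mm d = mm c.
Proof.
move=> cz dz dc; apply/permP => U; apply: val_inj.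
by rewrite !mmE // (mulsp_line _ cz dz dc).
Qed.

Lemma mm_mul c d : c != 0 -> d != 0 -> (mm c * mm d = mm (c * d))%g.
Proof.
move=> cz dz; apply/permP => U; apply: val_inj.
by rewrite permM !mmE ?mulf_neq0 // mulspM mulrC.
Qed.

Lemma mm1 : mm 1 = 1%g.
Proof. by apply/permP => U; apply: val_inj; rewrite perm1 mmE ?oner_neq0 // mulsp1. Qed.

Lemma sig2 : (sig * sig = 1)%g.
Proof.
apply/permP => U; apply: val_inj; rewrite permM perm1 !sigE perpK //.
exact: (valP U).
Qed.

Lemma sig_mm c : c != 0 -> (sig * mm c = mm c^-1 * sig)%g.
Proof.
move=> cz; apply/permP => U; apply: val_inj.
rewrite !permM sigE !mmE ?invr_neq0 // sigE perp_mulsp ?invr_neq0 //.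
by rewrite invrK.
Qed.

Definition Y : {set {perm VL}} :=
  [set g | [exists U : VL, (g == mm (vpick (val U))) || (g == (mm (vpick (val U)) * sig)%g)]].

Lemma inYP g : reflect (exists2 c, c != 0 & (g = mm c \/ g = (mm c * sig)%g)) (g \in Y).
Proof.
apply: (iffP idP) => [|[c cz Hg]].
  rewrite inE => /existsP[U /orP[] /eqP ->]; exists (vpick (val U));
    by [exact: vert_nz | left | right].
rewrite inE; apply/existsP; exists (point c).
have -> : mm (vpick (val (point c))) = mm c.
  apply: mm_line => //; first exact: vert_nz.
  by rewrite -(pointE cz) memv_pick.
by case: Hg => ->; rewrite eqxx ?orbT.
Qed.

Lemma groupY : group_set Y.
Proof.
apply/group_setP; split.
  by apply/inYP; exists 1; rewrite ?oner_neq0 // mm1; left.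
move=> g h /inYP[c cz Hg] /inYP[d dz Hh]; apply/inYP.
have dVz : d^-1 != 0 by rewrite invr_neq0.
case: Hg => ->; case: Hh => ->.
- by exists (c * d); rewrite ?mulf_neq0 // mm_mul //; left.
- by exists (c * d); rewrite ?mulf_neq0 // mulgA mm_mul //; right.
- exists (c * d^-1); rewrite ?mulf_neq0 //; right.
  by rewrite -mulgA sig_mm // mulgA mm_mul.
- exists (c * d^-1); rewrite ?mulf_neq0 //; left.
  by rewrite -mulgA [(sig * (_ * _))%g]mulgA sig_mm // -mulgA sig2 mulg1 mm_mul.
Qed.

Definition GY : {group {perm VL}} := Group groupY.

Lemma adjPH (x y : VL) : \dim (val x) = 1%N -> \dim (val y) = n.-1 ->
  (val x <= val y)%VS -> adjL x y && adjL y x.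
Proof. by move=> dx dy sxy; rewrite /adjL dx dy sxy !eqxx /= orbT. Qed.

Lemma hyper_above (U : {vspace L}) : (\dim U < n)%N ->
  exists W : VL, \dim (val W) = n.-1 /\ (U <= val W)%VS.
Proof.
move=> dU.
have a_nz : vpick (perp U) != 0.
  by apply: vpick_nz; apply: leq_trans (dim_perp U); rewrite subn_gt0.
set a := vpick (perp U) in a_nz.
exists (sig (point a)); rewrite sigE pointE //; split.
  by apply: perp_point; rewrite dim_vline a_nz.
apply: subv_trans (sub_perpperp U) _; apply: perp_anti.
by rewrite -memvE memv_pick.
Qed.

Lemma connL x : connect adjL v0 x.
Proof.
have dv0 : \dim (val v0) = 1%N by rewrite /= dim_vline oner_neq0.
case/orP: (valP x) => /eqP dx.
  have [W [dW sW]] : exists W : VL, \dim (val W) = n.-1 /\ ((val v0 + val x)%VS <= val W)%VS.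
    apply: hyper_above; have := dimv_sum_cap (val v0) (val x).
    rewrite dv0 dx => E; apply: (leq_ltn_trans _ n3).
    by rewrite -[2%N]/(1 + 1)%N -E leq_addr.
  rewrite subv_add in sW; case/andP: sW => s0 sx.
  apply: (@connect_trans _ _ W); apply: connect1.
    by case/andP: (adjPH dv0 dW s0).
  by case/andP: (adjPH dx dW sx).
have [W1 [dW1 sW1]] : exists W : VL, \dim (val W) = n.-1 /\ (val v0 <= val W)%VS.
  by apply: hyper_above; rewrite dv0 (leq_trans _ n3).
pose I := (val W1 :&: val x)%VS.
have dI : (0 < \dim I)%N.
  have := dimv_sum_cap (val W1) (val x); rewrite dW1 dx -/I => E.
  have : (\dim (val W1 + val x) <= n)%N by have := dimvS (subvf (val W1 + val x)%VS); rewrite dimL.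
  move: E n3; move: (\dim I) (\dim (val W1 + val x)%VS) => a b; lia.
have c_nz : vpick I != 0 by apply: vpick_nz.
have cI : vpick I \in I by apply: memv_pick.
rewrite memv_cap in cI; case/andP: cI => c1 cx.
have dP : \dim (val (point (vpick I))) = 1%N by rewrite pointE // dim_vline c_nz.
apply: (@connect_trans _ _ W1); first apply: connect1.
  by case/andP: (adjPH dv0 dW1 sW1).
apply: (@connect_trans _ _ (point (vpick I))); apply: connect1.
  have s1 : (val (point (vpick I)) <= val W1)%VS by rewrite pointE // -memvE.
  by case/andP: (adjPH dP dW1 s1).
have s2 : (val (point (vpick I)) <= val x)%VS by rewrite pointE // -memvE.
by case/andP: (adjPH dP dx s2).
Qed.

Lemma cayleyL : is_cayley_graph adjL.
Proof.
apply: (@sabidussi _ adjL GY v0).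
- move=> x; rewrite /adjL; case/orP: (valP x) => /eqP ->.
    by rewrite [(1 == n.-1)%N]eq_sym n1_neq1.
  by rewrite n1_neq1.
- by move=> x y; rewrite /adjL orbC.
- move=> g /inYP[c cz [->|->]] x y; rewrite ?permM ?adj_sig adj_mm //.
- move=> x; case/orP: (valP x) => /eqP dx.
    exists (mm (vpick (val x))); first by apply/inYP; exists (vpick (val x)); [exact: vert_nz|left].
    apply: val_inj; rewrite mmE ?vert_nz //= /mulsp limg_line lfunE /= mulr1.
    by rewrite -dim1_line.
  have dpx : \dim (perp (val x)) = 1%N by apply: perp_hyper.
  exists (mm (vpick (perp (val x))) * sig)%g.
    apply/inYP; exists (vpick (perp (val x))); last by right.
    by apply: vpick_nz; rewrite dpx.
  apply: val_inj; rewrite permM sigE mmE /= ?vpick_nz ?dpx // /mulsp limg_line lfunE /= mulr1.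
  by rewrite -dim1_line // perpK //; exact: (valP x).
- move=> g /inYP[c cz [->|->]] /(congr1 val).
    rewrite mmE //= /mulsp limg_line lfunE /= mulr1 => E.
    rewrite (mm_line (oner_neq0 L) cz) ?mm1 // -E memv_line //.
  rewrite permM sigE mmE //= /mulsp limg_line lfunE /= mulr1 => E.
  have := @perp_point <[c]>%VS; rewrite dim_vline cz E /= dim_vline oner_neq0.
  by move=> /(_ erefl) /eqP; rewrite eq_sym n1_neq1.
- exact: connL.
Qed.

End Geo.

Theorem mainTheorem6 (F : finFieldType) (n : nat) :
  (3 <= n)%N -> is_cayley_graph (@In_adj F n).
Proof.
move=> n3.
have n0 : (0 < n)%N by apply: leq_trans n3.
have [L dL] := ext_exists F n0.
have i0 : 'I_(\dim {:L}) by apply: (Ordinal (n := \dim {:L}) (m := 0)); rewrite dL.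
have C := cayleyL dL n3 i0.
have dL' : dim L = n by rewrite -dimvf.
clear dL; subst n.
pose f : 'Hom(L, 'rV[F]_(dim L)) := linfun (@v2r _ L).
pose g : 'Hom('rV[F]_(dim L), L) := linfun (@r2v _ L).
have fK : cancel f g by move=> x; rewrite !lfunE /= v2rK.
have gK : cancel g f by move=> x; rewrite !lfunE /= r2vK.
have hP (U : VL L (dim L)) :
    (\dim (f @: (val U : {vspace L}))%VS == 1%N) || (\dim (f @: (val U : {vspace L}))%VS == (dim L).-1).
  by rewrite (iso_dim fK); exact: (valP U).
have hP' (W : In_vertex F (dim L)) :
    (\dim (g @: val W)%VS == 1%N) || (\dim (g @: val W)%VS == (dim L).-1).
  by rewrite (iso_dim gK); exact: (valP W).
pose h (U : VL L (dim L)) : In_vertex F (dim L) := Sub (f @: (val U : {vspace L}))%VS (hP U).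
pose h' (W : In_vertex F (dim L)) : VL L (dim L) := Sub ((g @: val W)%VS : fvspace L) (hP' W).
apply: (cayley_transfer (h := h) _ _ C).
  exists h' => [U|W]; apply: val_inj => /=.
    exact: (iso_K fK).
  exact: (iso_K gK).
move=> x y; rewrite /In_adj /adjL /= !(iso_dim fK) !(iso_sub fK).
by [].
Qed.
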